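(* Let $\mathcal{X}\subseteq\mathbb{R}^d$ be nonempty, closed and convex, and let $f=\frac1n\sum_{i=1}^nf_i$ with each $f_i:\mathbb{R}^d\to\mathbb{R}$ differentiable; assume $\operatorname{arg\,min}_{x\in\mathcal{X}}f(x)$ is nonempty and that each $f_i$ has a constrained minimizer $x_{\star,i}\in\operatorname{arg\,min}_{x\in\mathcal{X}}f_i(x)$. Let $x_k\in\mathcal{X}$, let $i_k\in\{1,\dots,n\}$ be a given (realized) index and $g_{i_k}:=\nabla f_{i_k}(x_k)$. Assume $g_{i_k}\ne0$ and $0<t_k\le\frac{\langle g_{i_k},x_k-x_{\star,i_k}\rangle}{\|g_{i_k}\|}$, and let $x_{k+1}\in\operatorname{arg\,min}_{z\in\mathcal{X}\cap\mathcal{B}(x_k,t_k)}\langle g_{i_k},z\rangle$. Then $t_k\le\|x_k-x_{\star,i_k}\|$, $\|x_{k+1}-x_k\|=t_k$, and $\|x_{k+1}-x_{\star,i_k}\|^2\le\|x_k-x_{\star,i_k}\|^2-t_k^2$.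
   Context: $\|\cdot\|$ is the Euclidean norm, $\mathcal{B}(x,t):=\{y:\|y-x\|\le t\}$. *)

(* Defs.v *)
From HB Require Import structures.
From mathcomp Require Import all_boot all_order all_algebra.
From mathcomp Require Import all_classical all_reals all_analysis.
Set Implicit Arguments. Unset Strict Implicit. Unset Printing Implicit Defensive.
Import Order.TTheory GRing.Theory Num.Theory.
Import numFieldNormedType.Exports.
Local Open Scope classical_set_scope.
Local Open Scope ring_scope.

Definition dotv {R : realType} {d : nat} (u v : 'rV[R]_d) : R :=
  \sum_(i < d) u ord0 i * v ord0 i.
Definition enorm {R : realType} {d : nat} (u : 'rV[R]_d) : R :=
  Num.sqrt (dotv u u).

Definition eball {R : realType} {d : nat} (x : 'rV[R]_d) (t : R) : set 'rV[R]_d :=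
  [set y | enorm (y - x) <= t].

Definition is_argmin {R : realType} {d : nat} (X : set 'rV[R]_d)
  (h : 'rV[R]_d -> R) (z : 'rV[R]_d) : Prop :=
  X z /\ forall y, X y -> h z <= h y.

Definition is_gradient {R : realType} {d : nat} (h : 'rV[R]_d -> R)
  (x g : 'rV[R]_d) : Prop :=
  differentiable h x /\ forall v, 'd h x v = dotv g v.

(* Main.v *)
Require Import Defs.
From HB Require Import structures.
From mathcomp Require Import all_boot all_order all_algebra.
From mathcomp Require Import all_classical all_reals all_analysis.
From mathcomp Require Import ring lra.
Import Order.TTheory GRing.Theory Num.Theory.
Import numFieldNormedType.Exports.
Local Open Scope classical_set_scope.
Local Open Scope ring_scope.

Section H.
Context {R : realType} {d : nat}.
Implicit Types (p q r u v : 'rV[R]_d).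

Lemma dotvC p q : dotv p q = dotv q p.
Proof. by apply: eq_bigr => i _; rewrite mulrC. Qed.

Lemma dotv_lin (a b : R) p q r :
  dotv (a *: p + b *: q) r = a * dotv p r + b * dotv q r.
Proof.
rewrite /dotv !mulr_sumr -big_split /=; apply: eq_bigr => i _.
rewrite !mxE; ring.
Qed.

Lemma dotv_linr (a b : R) p q r :
  dotv r (a *: p + b *: q) = a * dotv r p + b * dotv r q.
Proof. by rewrite dotvC dotv_lin (dotvC p) (dotvC q). Qed.

Lemma dotvB p q r : dotv (p - q) r = dotv p r - dotv q r.
Proof.
rewrite /dotv -sumrB; apply: eq_bigr => i _; rewrite !mxE; ring.
Qed.

Lemma dotvBr p q r : dotv r (p - q) = dotv r p - dotv r q.
Proof. by rewrite dotvC dotvB (dotvC p) (dotvC q). Qed.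

Lemma dotvNN p q : dotv (p - q) (p - q) = dotv (q - p) (q - p).
Proof. by apply: eq_bigr => i _; rewrite !mxE; ring. Qed.

Lemma dotv_ge0 p : 0 <= dotv p p.
Proof. by apply: sumr_ge0 => i _; rewrite -expr2 sqr_ge0. Qed.

Lemma dotv_eq0 p : dotv p p = 0 -> p = 0.
Proof.
move=> /eqP; rewrite psumr_eq0; last by move=> i _; rewrite -expr2 sqr_ge0.
move=> /allP H; apply/rowP => j; rewrite mxE.
have := H j (mem_index_enum _); rewrite -expr2 sqrf_eq0 => /eqP.
by rewrite (ord1 ord0) => ->.
Qed.

Lemma enorm_sqr p : enorm p ^+ 2 = dotv p p.
Proof. by rewrite /enorm sqr_sqrtr // dotv_ge0. Qed.

Lemma enorm_ge0 p : 0 <= enorm p.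
Proof. exact: sqrtr_ge0. Qed.

Lemma enormNN p q : enorm (p - q) = enorm (q - p).
Proof. by rewrite /enorm dotvNN. Qed.

Lemma cauchy_schwarz u v : dotv u v <= enorm u * enorm v.
Proof.
have [v0|vn0] := eqVneq (dotv v v) 0.
  rewrite (dotv_eq0 v v0) /dotv big1 ?mulr_ge0 ?enorm_ge0 // => i _.
  by rewrite mxE mulr0.
have B0 : 0 < dotv v v by rewrite lt_neqAle eq_sym vn0 dotv_ge0.
set A := dotv u u; set B := dotv v v; set C := dotv u v.
have h := dotv_ge0 (B *: u + (- C) *: v).
rewrite dotv_lin !dotv_linr -/A -/B -/C (dotvC v u) -/C in h.
have hC : C ^+ 2 <= A * B.
  have h2 : 0 <= B * (A * B - C ^+ 2) by nra.
  by rewrite -subr_ge0; rewrite pmulr_rge0 in h2.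
apply: (le_trans (ler_norm C)).
rewrite -sqrtr_sqr /enorm -sqrtrM ?dotv_ge0 //.
by rewrite ler_sqrt // mulr_ge0 // dotv_ge0.
Qed.

Lemma convX (X : set 'rV[R]_d) : convex_set X ->
  forall (x y : 'rV[R]_d) (s : R), 0 <= s -> s <= 1 -> X x -> X y -> X (s *: x + (1-s) *: y).
Proof.
move=> cX x y s s0 s1 Xx Xy.
have hs : Itv.spec (@Itv.num_sem R) (Itv.Real `[0%Z, 1%Z]) s.
  by rewrite /Itv.spec /= /Itv.num_sem /= num_real /= in_itv /= s0 s1.
have := cX x y (Itv.Def hs).
rewrite !inE => /(_ Xx Xy).
by [].
Qed.

End H.

Theorem theorem10 (R : realType) (d n : nat) (X : set 'rV[R]_d)
  (fs : 'I_n -> 'rV[R]_d -> R) (xstar : 'I_n -> 'rV[R]_d)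
  (xk xk1 : 'rV[R]_d) (ik : 'I_n) (g : 'rV[R]_d) (tk : R) :
  X !=set0 -> closed X -> convex_set X ->
  (forall i x, differentiable (fs i) x) ->
  (exists xs, is_argmin X (fun x => n%:R^-1 * \sum_(i < n) fs i x) xs) ->
  (forall i, is_argmin X (fs i) (xstar i)) ->
  X xk ->
  is_gradient (fs ik) xk g ->
  g != 0 ->
  0 < tk -> tk <= dotv g (xk - xstar ik) / enorm g ->
  is_argmin (X `&` eball xk tk) (fun z => dotv g z) xk1 ->
  [/\ tk <= enorm (xk - xstar ik),
      enorm (xk1 - xk) = tk &
      enorm (xk1 - xstar ik) ^+ 2 <= enorm (xk - xstar ik) ^+ 2 - tk ^+ 2].
Proof.
move=> _ _ cX _ _ hstar Xxk _ gn0 tk0 htk [[Xxk1 Bxk1] hmin].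
have [Xxs _] := hstar ik.
set xs := xstar ik in Xxs htk *.
set G := enorm g.
have G0 : 0 < G.
  rewrite /G /enorm sqrtr_gt0 lt_neqAle dotv_ge0 andbT eq_sym.
  by apply/negP => /eqP /dotv_eq0 g0; rewrite g0 eqxx in gn0.
have ha : dotv g (xk - xs) = dotv g xk - dotv g xs by rewrite dotvBr.
have CS1 := cauchy_schwarz g (xk - xs).
have h1 : tk <= enorm (xk - xs).
  by apply: (le_trans htk); rewrite ler_pdivrMr // mulrC.
have tk2 : tk ^+ 2 <= dotv (xk - xs) (xk - xs).
  by rewrite -enorm_sqr; nra.
have keyB : forall z, X z -> eball xk tk z ->
    (forall y, X y -> eball xk tk y -> dotv g z <= dotv g y) ->
    tk ^+ 2 <= dotv (z - xk) (z - xk).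
  move=> z Xz Bz zmin; rewrite leNgt; apply/negP => hlt.
  set r2 := dotv (z - xk) (z - xk) in hlt.
  have r20 : 0 <= r2 := dotv_ge0 _.
  have hr : enorm (z - xk) < tk.
    rewrite /enorm -/r2 -(ger0_norm (ltW tk0)) -sqrtr_sqr.
    by rewrite ltr_sqrt // exprn_gt0.
  have CS2 := cauchy_schwarz g (xk - z).
  rewrite enormNN dotvBr in CS2.
  have hGs : dotv g xs < dotv g z.
    have : G * enorm (z - xk) < G * tk by rewrite ltr_pM2l.
    rewrite ler_pdivlMr // in htk.
    rewrite -/G in CS2. rewrite ha in htk. rewrite -/G in htk. nra.
  set E2 := dotv (xk - xs) (xk - xs) in tk2.
  set s := (tk ^+ 2 - r2) / (E2 - r2).
  have E2r : 0 < E2 - r2 by lra.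
  have hs : s * (E2 - r2) = tk ^+ 2 - r2 by rewrite /s mulfVK // gt_eqF.
  have s0 : 0 < s by rewrite /s divr_gt0 // subr_gt0.
  have s1 : s <= 1 by rewrite /s ler_pdivrMr // mul1r; lra.
  set y := s *: xs + (1 - s) *: z.
  have Xy : X y by apply: convX => //; lra.
  have hy : y - xk = s *: (xs - xk) + (1 - s) *: (z - xk).
    by apply/rowP => i; rewrite !mxE; ring.
  have hD := dotv_ge0 ((xs - xk) - (z - xk)).
  rewrite !dotvB !dotvBr in hD.
  have hE : dotv (xs - xk) (xs - xk) = E2 by rewrite dotvNN.
  have hyn : dotv (y - xk) (y - xk) <= tk ^+ 2.
    rewrite hy dotv_lin !dotv_linr hE (dotvC (z - xk) (xs - xk)) -/r2.
    rewrite !dotvB !dotvBr in hE.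
    rewrite /r2 !dotvB !dotvBr in hs r20 *.
    rewrite /E2 !dotvB !dotvBr in hs E2r *.
    have hsD : 0 <= s * (1 - s) * (dotv xs xs - dotv xk xs - (dotv xs xk - dotv xk xk) -
      (dotv z xs - dotv xk xs - (dotv z xk - dotv xk xk)) -
      (dotv xs z - dotv xk z - (dotv xs xk - dotv xk xk) -
      (dotv z z - dotv xk z - (dotv z xk - dotv xk xk)))).
      by apply: mulr_ge0; [apply: mulr_ge0; lra | lra].
    rewrite (dotvC xk xs) (dotvC xk z) (dotvC xs z) in hsD hE hs E2r *.
    nra.
  have By : eball xk tk y.
    rewrite /eball /=; rewrite /enorm -(ger0_norm (ltW tk0)) -sqrtr_sqr.
    by rewrite ler_sqrt // sqr_ge0.
  have := zmin y Xy By.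
  rewrite /y dotv_linr; nra.
have h2 : enorm (xk1 - xk) = tk.
  apply/eqP; rewrite eq_le Bxk1 /=.
  have := keyB xk1 Xxk1 Bxk1 (fun y Xy By => hmin y (conj Xy By)).
  move=> hk; rewrite -(ger0_norm (ltW tk0)) -sqrtr_sqr /enorm.
  by rewrite ler_sqrt ?dotv_ge0.
split => //.
set u := xs - xk; set w := xk1 - xk.
have hW : dotv w w = tk ^+ 2 by rewrite -enorm_sqr h2.
have e1 : xk1 - xs = w - u by apply/rowP => i; rewrite !mxE; ring.
have e2 : dotv (xk - xs) (xk - xs) = dotv u u by rewrite dotvNN.
rewrite !enorm_sqr e1 e2 dotvB (dotvBr w u w) (dotvBr w u u) hW (dotvC u w).
set M := dotv w u; set U := dotv u u.
suff hM : tk ^+ 2 <= M by lra.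
rewrite leNgt; apply/negP => hlt.
set D := dotv (u - w) (u - w).
have hD : D = U - 2 * M + tk ^+ 2.
  by rewrite /D dotvB (dotvBr u w u) (dotvBr u w w) hW (dotvC u w) -/M -/U; ring.
have D0 : 0 <= D := dotv_ge0 _.
set del := tk ^+ 2 - M.
have del0 : 0 < del by rewrite /del subr_gt0.
set s := del / (del + D).
have dD : 0 < del + D by lra.
have hs : s * (del + D) = del by rewrite /s mulfVK // gt_eqF.
have s0 : 0 < s by rewrite /s divr_gt0.
have s1 : s <= 1 by rewrite /s ler_pdivrMr // mul1r; lra.
set y := s *: xs + (1 - s) *: xk1.
have Xy : X y by apply: convX => //; lra.
have hy : y - xk = s *: u + (1 - s) *: w.
  by apply/rowP => i; rewrite !mxE; ring.
have hyn : dotv (y - xk) (y - xk) < tk ^+ 2.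
  rewrite hy dotv_lin !dotv_linr (dotvC u w) -/M -/U hW.
  have : s * (s * D) <= s * del by rewrite ler_pM2l //; nra.
  rewrite hD in hs *. move=> hh.
  have hdel : del = tk ^+ 2 - M by [].
  have sd : 0 < s * del by rewrite mulr_gt0.
  rewrite hdel in hh sd. nra.
have By : eball xk tk y.
  rewrite /eball /=; rewrite /enorm -(ger0_norm (ltW tk0)) -sqrtr_sqr.
  by rewrite ler_sqrt ?sqr_ge0 // ltW.
have CS3 := cauchy_schwarz g (xk - xk1).
rewrite enormNN h2 dotvBr -/G in CS3.
rewrite ler_pdivlMr // ha -/G in htk.
have gy : dotv g y <= dotv g xk1 by rewrite /y dotv_linr; nra.
have := keyB y Xy By (fun y' Xy' By' => le_trans gy (hmin y' (conj Xy' By'))).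
by rewrite leNgt hyn.
Qed.
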